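(* Consider a run of Algorithm 1 (described in the context). Let $I_j$ be a correcting interval. Then at the time $I_j$ is bisected, $f(I_j)\subset Y_j$.
   Context: Problem. Fix $L>0$ and $T\ge 2$. An adversary fixes an unknown $L$-Lipschitz $f:[0,1]\to[0,L]$. In each round $t=1,\dots,T$: the adversary chooses $x_t\in[0,1]$; the learner observes $x_t$ and guesses $q_t$; the adversary observes $q_t$ and sends $\sigma_t\in\{0,1\}$, equal to $\sigma(q_t-f(x_t))$ in uncorrupted rounds and $1-\sigma(q_t-f(x_t))$ in corrupted rounds, where $\sigma(u)=1$ if $u>0$ and $0$ if $u\le 0$; the adversary chooses adaptively which rounds to corrupt, at most $C$ in total ($C$ unknown to the learner). $\mathtt{len}(I)$ is the length of an interval $I$. $\mathtt{MidpointQuery}(I,Y)$, $Y=[a,b]$: guess $q=(a+b)/2$; if $\sigma_t=1$ return $Y\cap[0,q+L\,\mathtt{len}(I)]$, if $\sigma_t=0$ return $Y\cap[q-L\,\mathtt{len}(I),L]$. Algorithm 1. Maintain a partition of $[0,1]$ into intervals; each $I_j$ carries a checking interval $S_j$, range $Y_j$, and a ''dubious'' flag (initially unset). Initially: $8$ intervals of length $1/8$ (the root intervals), each with $S_j=Y_j=[0,L]$. In round $t$, with $I_j$ the partition interval containing $x_t$: (i) if some endpoint of $S_j$ has not been guessed in a round whose context lay in $I_j$, guess such an endpoint; if the guess was $\min(S_j)$ with $\sigma_t=1$ or $\max(S_j)$ with $\sigma_t=0$, mark $I_j$ dubious; once both endpoints have been queried, set $Y_j=[0,L]$ if dubious and otherwise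 $Y_j=[\min(S_j)-L\,\mathtt{len}(I_j),\max(S_j)+L\,\mathtt{len}(I_j)]\cap[0,L]$. (ii) Otherwise set $Y_j:=\mathtt{MidpointQuery}(I_j,Y_j)$; if then $\mathtt{len}(Y_j)<\max(4L\,\mathtt{len}(I_j),4L/T)$, bisect $I_j$ into its two halves (its children, of which $I_j$ is the parent), which replace it, each with checking interval equal to the current $Y_j$ (endpoints unqueried, not dubious). Interval types. Say a round $t$ lies in $I_j$ if $I_j$ is the partition interval containing $x_t$ at round $t$. An interval $I_j$ is corrupted if some round lying in $I_j$ has a corrupted signal; it is correcting if its parent is corrupted and every round lying in $I_j$ is uncorrupted; it is safe if it is a root interval or its parent is safe or correcting, and every round lying in $I_j$ is uncorrupted. *)

(* Defs.v *)
From Stdlib Require Import Reals Lra List Bool Arith.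
Open Scope R_scope.

Definition Rleb (a b : R) : bool := if Rle_dec a b then true else false.
Definition Rltb (a b : R) : bool := if Rlt_dec a b then true else false.
Definition Reqb (a b : R) : bool := if Req_EM_T a b then true else false.

Definition sig (u : R) : bool := Rltb 0 u.

(* A partition interval: the dyadic interval I = [k/2^d, (k+1)/2^d] of
   depth d, with its checking interval S = [Slo,Shi], range Y = [Ylo,Yhi],
   flags recording whether min S / max S have been guessed in a round whose
   context lay in I, and the dubious flag. *)
Record node := mkNode {
  nd : nat; nk : nat;
  Slo : R; Shi : R;
  Ylo : R; Yhi : R;
  qmin : bool; qmax : bool; dub : bool }.

Definition ilo (n : node) : R := INR (nk n) / 2 ^ (nd n).
Definition ihi (n : node) : R := INR (S (nk n)) / 2 ^ (nd n).
Definition ilen (n : node) : R := / 2 ^ (nd n).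

(* Partition membership: intervals are half-open [lo,hi), except that the
   last one also contains 1. *)
Definition in_nodeb (n : node) (x : R) : bool :=
  Rleb (ilo n) x && (Rltb x (ihi n) || (Reqb x 1 && Nat.eqb (S (nk n)) (Nat.pow 2 (nd n)))).

Definition init (L : R) : list node :=
  map (fun k => mkNode 3 k 0 L 0 L false false false) (seq 0 8).

(* Processing of the interval containing the context in one round.
   corr = true iff the signal of this round is corrupted (flipped). *)
Definition process (L : R) (T : nat) (f : R -> R) (x : R) (corr : bool)
    (n : node) : list node * (node * bool) :=
  let s q := xorb (sig (q - f x)) corr in
  let len := ilen n in
  let setY (dubf : bool) (a b : R) : R * R :=
    if dubf then (0, L) else (Rmax 0 (a - L * len), Rmin L (b + L * len)) in
  if negb (qmin n) then
    let sg := s (Slo n) in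
    let dub' := dub n || sg in
    let Y' := if qmax n then setY dub' (Slo n) (Shi n) else (Ylo n, Yhi n) in
    let n' := mkNode (nd n) (nk n) (Slo n) (Shi n) (fst Y') (snd Y') true (qmax n) dub' in
    (n' :: nil, (n', false))
  else if negb (qmax n) then
    let sg := s (Shi n) in
    let dub' := dub n || negb sg in
    let Y' := setY dub' (Slo n) (Shi n) in
    let n' := mkNode (nd n) (nk n) (Slo n) (Shi n) (fst Y') (snd Y') true true dub' in
    (n' :: nil, (n', false))
  else
    let a := Ylo n in let b := Yhi n in
    let q := (a + b) / 2 in
    let sg := s q in
    let Y' := if sg then (Rmax a 0, Rmin b (q + L * len))
              else (Rmax a (q - L * len), Rmin b L) in
    let n' := mkNode (nd n) (nk n) (Slo n) (Shi n) (fst Y') (snd Y')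
                     (qmin n) (qmax n) (dub n) in
    if Rltb (snd Y' - fst Y') (Rmax (4 * L * len) (4 * L / INR T)) then
      let c1 := mkNode (S (nd n)) (2 * nk n)%nat (fst Y') (snd Y') (fst Y') (snd Y')
                       false false false in
      let c2 := mkNode (S (nd n)) (S (2 * nk n)) (fst Y') (snd Y') (fst Y') (snd Y')
                       false false false in
      (c1 :: c2 :: nil, (n', true))
    else (n' :: nil, (n', false)).

Fixpoint step (L : R) (T : nat) (f : R -> R) (x : R) (corr : bool)
    (st : list node) : list node * option (node * bool) :=
  match st with
  | nil => (nil, None)
  | n :: st' =>
      if in_nodeb n x then
        let (ns, i) := process L T f x corr n in (ns ++ st', Some i)
      else let (st'', o) := step L T f x corr st' in (n :: st'', o)
  end.

(* state L T f xs cs m = partition after rounds 1..m;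
   round t has context xs t and corruption flag cs t. *)
Fixpoint state (L : R) (T : nat) (f : R -> R) (xs : nat -> R) (cs : nat -> bool)
    (m : nat) : list node :=
  match m with
  | O => init L
  | S m' => fst (step L T f (xs m) (cs m) (state L T f xs cs m'))
  end.

(* What happened in round t: the interval containing x_t (after its update
   in that round) and whether it was bisected in that round. *)
Definition event (L : R) (T : nat) (f : R -> R) (xs : nat -> R) (cs : nat -> bool)
    (t : nat) : option (node * bool) :=
  snd (step L T f (xs t) (cs t) (state L T f xs cs (pred t))).

Definition lies_in L T f xs cs (t d k : nat) : Prop :=
  (1 <= t <= T)%nat /\
  exists n b, event L T f xs cs t = Some (n, b) /\ nd n = d /\ nk n = k.

Definition corrupted_int L T f xs cs (d k : nat) : Prop :=
  exists t, lies_in L T f xs cs t d k /\ cs t = true.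

(* Roots have depth 3; the parent of (d,k) is (d-1, k/2). *)
Definition correcting_int L T f xs cs (d k : nat) : Prop :=
  (3 < d)%nat /\ corrupted_int L T f xs cs (pred d) (Nat.div k 2) /\
  forall t, lies_in L T f xs cs t d k -> cs t = false.

(* Main.v *)
Require Import Defs.
From Stdlib Require Import Reals Lra List Bool Arith Lia.
Open Scope R_scope.

Definition Bnd (n : node) : Prop := (S (nk n) <= Nat.pow 2 (nd n))%nat.

Lemma pow2_pos d : 0 < 2 ^ d.
Proof. apply pow_lt; lra. Qed.

Lemma bnd_geom n : Bnd n -> 0 <= ilo n /\ ihi n <= 1 /\ ihi n - ilo n = ilen n.
Proof.
  unfold Bnd, ilo, ihi, ilen; intros H.
  pose proof (pow2_pos (nd n)) as P.
  assert (HI : INR (S (nk n)) <= 2 ^ nd n).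
  { replace 2 with (INR 2) by (simpl; lra). rewrite <- pow_INR.
    apply le_INR; exact H. }
  pose proof (pos_INR (nk n)).
  rewrite S_INR in *.
  split; [|split].
  - apply Rmult_le_pos; [lra| left; apply Rinv_0_lt_compat; lra].
  - apply (Rmult_le_reg_r (2 ^ nd n)); [lra|]. unfold Rdiv. rewrite Rmult_assoc, Rinv_l; lra.
  - field. lra.
Qed.

Definition Good (L : R) (f : R -> R) (n : node) : Prop :=
  (qmin n = true -> dub n = false -> forall y, ilo n <= y <= ihi n -> Slo n - L * ilen n <= f y) /\
  (qmax n = true -> dub n = false -> forall y, ilo n <= y <= ihi n -> f y <= Shi n + L * ilen n) /\
  (qmin n = true -> qmax n = true -> forall y, ilo n <= y <= ihi n -> Ylo n <= f y <= Yhi n).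

Lemma in_node_bounds n x : Bnd n -> 0 <= x <= 1 -> in_nodeb n x = true -> ilo n <= x <= ihi n.
Proof.
  intros B Hx H. unfold in_nodeb, Rleb, Rltb, Reqb in H.
  destruct (Rle_dec (ilo n) x); [|discriminate].
  destruct (Rlt_dec x (ihi n)); [lra|].
  destruct (Req_EM_T x 1); [|discriminate].
  rewrite andb_true_l in H. apply Nat.eqb_eq in H.
  split; [lra|]. unfold ihi. rewrite H, pow_INR. simpl INR.
  replace (1+1) with 2 by lra. pose proof (pow2_pos (nd n)).
  unfold Rdiv; rewrite Rinv_r; lra.
Qed.

Lemma near L f n x y : 0 < L ->
  (forall y z, 0 <= y <= 1 -> 0 <= z <= 1 -> Rabs (f y - f z) <= L * Rabs (y - z)) ->
  Bnd n -> ilo n <= x <= ihi n -> ilo n <= y <= ihi n ->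
  f x - L * ilen n <= f y <= f x + L * ilen n.
Proof.
  intros HL Lip B Hx Hy. destruct (bnd_geom n B) as (G1 & G2 & G3).
  assert (A : Rabs (f y - f x) <= L * Rabs (y - x)) by (apply Lip; lra).
  assert (Rabs (y - x) <= ilen n) by (apply Rabs_le; lra).
  assert (L * Rabs (y - x) <= L * ilen n) by (apply Rmult_le_compat_l; lra).
  pose proof (Rle_abs (f y - f x)). pose proof (Rle_abs (-(f y - f x))) as N. rewrite Rabs_Ropp in N. lra.
Qed.

Lemma process_ndk L T f x corr n :
  nd (fst (snd (process L T f x corr n))) = nd n /\ nk (fst (snd (process L T f x corr n))) = nk n.
Proof.
  unfold process. destruct (qmin n), (qmax n); simpl; auto;
  destruct (Rltb _ _); simpl; auto.
Qed.

Lemma process_fst L T f x corr n m :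
  In m (fst (process L T f x corr n)) ->
  m = fst (snd (process L T f x corr n)) \/ (qmin m = false /\ qmax m = false /\ (Bnd n -> Bnd m)).
Proof.
  unfold process. destruct (qmin n), (qmax n); simpl; try (intros [H|[]]; auto; fail);
  destruct (Rltb _ _); simpl; try (intros [H|[]]; auto; fail).
  intros [H|[H|[]]]; subst; right; simpl; unfold Bnd; simpl; repeat split; lia.
Qed.

Arguments ilo : simpl never.
Arguments ihi : simpl never.
Arguments ilen : simpl never.
Lemma ilo_mk n a b c d e g h : ilo (mkNode (nd n) (nk n) a b c d e g h) = ilo n.
Proof. reflexivity. Qed.
Lemma ihi_mk n a b c d e g h : ihi (mkNode (nd n) (nk n) a b c d e g h) = ihi n.
Proof. reflexivity. Qed.
Lemma ilen_mk n a b c d e g h : ilen (mkNode (nd n) (nk n) a b c d e g h) = ilen n.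
Proof. reflexivity. Qed.

Lemma process_good L T f x n : 0 < L ->
  (forall y z, 0 <= y <= 1 -> 0 <= z <= 1 -> Rabs (f y - f z) <= L * Rabs (y - z)) ->
  (forall y, 0 <= y <= 1 -> 0 <= f y <= L) ->
  0 <= x <= 1 -> Bnd n -> in_nodeb n x = true -> Good L f n ->
  Good L f (fst (snd (process L T f x false n))) /\
  (snd (snd (process L T f x false n)) = true ->
     qmin (fst (snd (process L T f x false n))) = true /\ qmax (fst (snd (process L T f x false n))) = true).
Proof.
  intros HL Lip Rg Hx B Hin [G1 [G2 G3]].
  pose proof (in_node_bounds n x B Hx Hin) as Xb.
  pose proof (bnd_geom n B) as (B1 & B2 & B3).
  assert (NR : forall y, ilo n <= y <= ihi n ->
     f x - L * ilen n <= f y <= f x + L * ilen n /\ 0 <= f y <= L).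
  { intros y Hy. split; [apply (near L f n x y); auto| apply Rg; lra]. }
  clear Lip Rg Hin.
  unfold process, Good, sig, Rltb in *.
  destruct (qmin n) eqn:E1, (qmax n) eqn:E2, (dub n) eqn:E3; simpl in *;
  repeat match goal with
  | |- context [Rlt_dec ?a ?b] => destruct (Rlt_dec a b)
  end; simpl in *;
  rewrite ?ilo_mk, ?ihi_mk, ?ilen_mk;
  repeat split; try discriminate; intros;
  repeat match goal with H : _ = true |- _ => clear H end;
  try (match goal with H : ilo n <= ?y <= ihi n |- _ => 
    lazymatch y with x => fail | _ => 
    pose proof (NR y H); 
    try specialize (G1 eq_refl eq_refl y H);
    try specialize (G2 eq_refl eq_refl y H);
    try specialize (G3 eq_refl eq_refl y H) end end);
  unfold Rmax, Rmin in *;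
  repeat match goal with |- context [Rle_dec ?a ?b] => destruct (Rle_dec a b) end;
  try lra.
Qed.

Lemma step_spec L T f x corr st :
  (forall m, In m (fst (step L T f x corr st)) -> In m st \/
     exists n0, In n0 st /\ in_nodeb n0 x = true /\ In m (fst (process L T f x corr n0)) /\
       snd (step L T f x corr st) = Some (snd (process L T f x corr n0))) /\
  (forall p, snd (step L T f x corr st) = Some p ->
     exists n0, In n0 st /\ in_nodeb n0 x = true /\ p = snd (process L T f x corr n0)).
Proof.
  induction st as [|a st IH]; simpl.
  - split; [tauto| discriminate].
  - destruct (in_nodeb a x) eqn:Ea.
    + destruct (process L T f x corr a) as [ns i] eqn:Ep. simpl. split.
      * intros m Hm. apply in_app_or in Hm. destruct Hm as [Hm|Hm].
        -- right. exists a. rewrite Ep. simpl. auto.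
        -- left. auto.
      * intros p Hp. inversion Hp; subst. exists a. rewrite Ep. auto.
    + destruct (step L T f x corr st) as [st'' o] eqn:Es. simpl in *.
      destruct IH as [IH1 IH2]. split.
      * intros m [Hm|Hm].
        -- subst. left. auto.
        -- destruct (IH1 m Hm) as [H|(n0 & H1 & H2 & H3 & H4)]; [left; auto|].
           right. exists n0. auto.
      * intros p Hp. destruct (IH2 p Hp) as (n0 & H1 & H2 & H3). exists n0. auto.
Qed.

Lemma inv L T f xs cs : 0 < L ->
  (forall y z, 0 <= y <= 1 -> 0 <= z <= 1 -> Rabs (f y - f z) <= L * Rabs (y - z)) ->
  (forall y, 0 <= y <= 1 -> 0 <= f y <= L) ->
  (forall t, (1 <= t <= T)%nat -> 0 <= xs t <= 1) ->
  forall m, (m <= T)%nat -> forall n, In n (state L T f xs cs m) ->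
  Bnd n /\ ((forall s, (s <= m)%nat -> lies_in L T f xs cs s (nd n) (nk n) -> cs s = false) -> Good L f n).
Proof.
  intros HL Lip Rg Xs. induction m as [|m IH]; intros Hm n Hn.
  - unfold state, init in Hn. apply in_map_iff in Hn.
    destruct Hn as (k & <- & Hk). apply in_seq in Hk. unfold Bnd, Good; simpl.
    split; [lia|]. intros _. repeat split; discriminate.
  - simpl in Hn.
    destruct (step_spec L T f (xs (S m)) (cs (S m)) (state L T f xs cs m)) as [S1 _].
    destruct (S1 n Hn) as [H|(n0 & H1 & H2 & H3 & H4)].
    + destruct (IH ltac:(lia) n H) as [Hb Hg]. split; [exact Hb|].
      intros P. apply Hg. intros s Hs. apply P. lia.
    + destruct (IH ltac:(lia) n0 H1) as [Hb Hg].
      destruct (process_fst L T f (xs (S m)) (cs (S m)) n0 n H3) as [E|(Q1 & Q2 & Q3)].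
      * destruct (process_ndk L T f (xs (S m)) (cs (S m)) n0) as [D K].
        rewrite <- E in D, K.
        split; [unfold Bnd in *; rewrite D, K; exact Hb|].
        intros P.
        assert (Hc : cs (S m) = false).
        { apply P; [lia|]. split; [lia|].
          exists n, (snd (snd (process L T f (xs (S m)) (cs (S m)) n0))).
          split; [|auto]. unfold event. simpl pred. rewrite H4. rewrite E.
          destruct (snd (process _ _ _ _ _ n0)); reflexivity. }
        assert (G0 : Good L f n0).
        { apply Hg. intros s Hs Hl. apply P; [lia|]. rewrite D, K. exact Hl. }
        rewrite Hc in E. subst n.
        apply (process_good L T f (xs (S m)) n0); auto. apply Xs; lia.
      * split; [auto|]. intros _. unfold Good. rewrite Q1, Q2. repeat split; discriminate.
Qed.

Theorem lemma22 (L : R) (T C : nat) (f : R -> R) (xs : nat -> R) (cs : nat -> bool) :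
  0 < L -> (2 <= T)%nat ->
  (forall y z, 0 <= y <= 1 -> 0 <= z <= 1 -> Rabs (f y - f z) <= L * Rabs (y - z)) ->
  (forall y, 0 <= y <= 1 -> 0 <= f y <= L) ->
  (forall t, (1 <= t <= T)%nat -> 0 <= xs t <= 1) ->
  (length (filter cs (seq 1 T)) <= C)%nat ->
  forall (t : nat) (n : node),
    (1 <= t <= T)%nat ->
    event L T f xs cs t = Some (n, true) ->
    correcting_int L T f xs cs (nd n) (nk n) ->
    forall y, ilo n <= y <= ihi n -> Ylo n <= f y <= Yhi n.
Proof.
  intros HL HT Lip Rg Xs _ t n Ht Ev [_ [_ P]] y Hy.
  assert (Hc : cs t = false).
  { apply P. split; [lia|]. exists n, true. auto. }
  destruct (step_spec L T f (xs t) (cs t) (state L T f xs cs (pred t))) as [_ S2].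
  destruct (S2 _ Ev) as (n0 & H1 & H2 & H3).
  destruct (inv L T f xs cs HL Lip Rg Xs (pred t) ltac:(lia) n0 H1) as [Hb Hg].
  destruct (process_ndk L T f (xs t) (cs t) n0) as [D K].
  rewrite <- H3 in D, K. simpl in D, K.
  assert (G0 : Good L f n0).
  { apply Hg. intros s Hs Hl. apply P. rewrite D, K. exact Hl. }
  rewrite Hc in H3.
  destruct (process_good L T f (xs t) n0 HL Lip Rg (Xs t Ht) Hb H2 G0) as [Gn Q].
  rewrite <- H3 in Gn, Q. simpl in Gn, Q.
  destruct (Q eq_refl) as [Q1 Q2].
  destruct Gn as [_ [_ G3]]. apply G3; auto.
Qed.
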